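(* Fix $\rho\in(-1,1)$, real numbers $\mu_D$, $\sigma_D>0$, $\mu_L\ge0$, $\sigma_L>0$ and an integer $n\ge1$. Then the function $m\mapsto B_m(\rho)$ (with $B_m$ the function defined in the context, with lead-time forecast window $m$) is strictly decreasing on the positive integers $m\ge1$.
   Context: For fixed real parameters $\mu_D$, $\sigma_D>0$, $\mu_L\ge0$, $\sigma_L\ge0$ and integers $n,m\ge1$, define for $\rho\in(-1,1)$ $$B_m(\rho)=\frac{2\sigma_L^2}{n^2m^2}\left(m(1-\rho^n)+\frac{n(1+\rho)}{1-\rho}-\frac{(1+\rho^2)(1-\rho^n)}{(1-\rho)^2}\right)+\frac{2\sigma_L^2\mu_D^2}{\sigma_D^2 m^2}+\left(\frac{2\mu_L^2}{n^2}+\frac{2\mu_L}{n}\right)(1-\rho^n)+1 .$$ (This is the bullwhip measure $\operatorname{Var}q_t/\operatorname{Var}D_t$ for AR(1) demand with autocorrelation $\rho$, mean $\mu_D$ and variance $\sigma_D^2$, i.i.d. lead times with mean $\mu_L$ and variance $\sigma_L^2$, moving-average demand forecast over $n$ periods and moving-average lead-time forecast over $m$ periods, under the order-up-to policy.) *)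

(* Defs.v *)
From Stdlib Require Import Reals Lra Lia.
Open Scope R_scope.

(* Bullwhip measure B_m(rho) for AR(1) demand, MA(n) demand forecast and
   MA(m) lead-time forecast, exactly as in the paper's context. *)
Definition bullwhipB (muD sigmaD muL sigmaL : R) (n m : nat) (rho : R) : R :=
  let nR := INR n in
  let mR := INR m in
  2 * sigmaL ^ 2 / (nR ^ 2 * mR ^ 2) *
    (mR * (1 - rho ^ n) + nR * (1 + rho) / (1 - rho)
     - (1 + rho ^ 2) * (1 - rho ^ n) / (1 - rho) ^ 2)
  + 2 * sigmaL ^ 2 * muD ^ 2 / (sigmaD ^ 2 * mR ^ 2)
  + (2 * muL ^ 2 / nR ^ 2 + 2 * muL / nR) * (1 - rho ^ n)
  + 1.

(* Main.v *)
Require Import Defs.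
From Stdlib Require Import Reals.
From Stdlib Require Import Lra Lia Psatz.
Open Scope R_scope.

Lemma pow_abs_le (r : R) (n : nat) : Rabs r <= 1 -> (1 <= n)%nat -> Rabs (r ^ n) <= Rabs r.
Proof.
  intros H Hn. induction n as [|k IH]; [lia|].
  destruct k. simpl. rewrite Rmult_1_r; lra.
  rewrite <- RPow_abs. simpl. rewrite <- RPow_abs in IH.
  assert (0 <= Rabs r) by apply Rabs_pos.
  assert (0 <= Rabs r ^ k) by (apply pow_le; lra).
  simpl in IH. specialize (IH ltac:(lia)). nra.
Qed.

Lemma bern (r : R) (n : nat) : 0 <= r <= 1 -> 1 - r ^ n <= INR n * (1 - r).
Proof.
  intros H. induction n as [|k IH]. simpl; lra.
  rewrite S_INR. simpl.
  assert (0 <= r ^ k <= 1) by (split; [apply pow_le; lra| destruct k; [simpl; lra|]; destruct (Req_dec r 1) as [->|]; [rewrite pow1; lra|]; apply Rlt_le, (pow_lt_1_compat r (S k)); [lra|lia]]).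
  nra.
Qed.

Lemma key (rho : R) (n : nat) : -1 < rho < 1 -> (1 <= n)%nat ->
  0 < 1 - rho ^ n /\
  0 < 2 * (1 - rho) ^ 2 * (1 - rho ^ n) + 3 * (INR n * (1 - rho ^ 2) - (1 + rho ^ 2) * (1 - rho ^ n)).
Proof.
  intros Hr Hn.
  assert (Habs : Rabs (rho ^ n) <= Rabs rho) by (apply pow_abs_le; [apply Rabs_le; lra | lia]).
  assert (Hn1 : 1 <= INR n) by (apply (le_INR 1); lia).
  assert (Ht : - Rabs rho <= rho ^ n <= Rabs rho).
  { unfold Rabs in *. destruct (Rcase_abs (rho ^ n)); destruct (Rcase_abs rho); lra. }
  destruct (Rle_dec 0 rho).
  - rewrite Rabs_right in Ht by lra.
    pose proof (bern rho n ltac:(lra)).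
    split; [lra|]. set (t := rho ^ n) in *.
    assert (A1 : (1 - t) * (1 + 4*rho + rho^2) <= INR n * (1 - rho) * (1 + 4*rho + rho^2)) by (apply Rmult_le_compat_r; nra).
    assert (A2 : INR n * (1 - rho) * (1 + 4*rho + rho^2) < INR n * (1 - rho) * (3 * (1 + rho))).
    { apply Rmult_lt_compat_l; nra. }
    nra.
  - rewrite Rabs_left in Ht by lra.
    split; [lra|]. set (t := rho ^ n) in *.
    assert (B0 : 0 < 1 - rho^2) by nra.
    assert (B1 : 1 - rho^2 <= INR n * (1 - rho^2)) by nra.
    destruct (Rle_dec (1 + 4*rho + rho^2) 0).
    + assert (0 <= (1 - t) * (-(1 + 4*rho + rho^2))) by (apply Rmult_le_pos; lra). nra.
    + assert ((1 - t) * (1 + 4*rho + rho^2) <= (1 - rho) * (1 + 4*rho + rho^2)) by (apply Rmult_le_compat_r; lra).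
      nra.
Qed.

Lemma form (muD sigmaD muL sigmaL rho : R) (n m : nat) :
  rho < 1 -> 0 < sigmaD -> (1 <= n)%nat -> (1 <= m)%nat ->
  bullwhipB muD sigmaD muL sigmaL n m rho =
  2 * sigmaL ^ 2 / INR n ^ 2 *
    ((1 - rho ^ n) * / INR m +
     (INR n * (1 + rho) / (1 - rho) - (1 + rho ^ 2) * (1 - rho ^ n) / (1 - rho) ^ 2) * (/ INR m) ^ 2)
  + 2 * sigmaL ^ 2 * muD ^ 2 / sigmaD ^ 2 * (/ INR m) ^ 2
  + (2 * muL ^ 2 / INR n ^ 2 + 2 * muL / INR n) * (1 - rho ^ n) + 1.
Proof.
  intros Hr Hs Hn Hm.
  assert (INR n <> 0) by (apply not_0_INR; lia).
  assert (INR m <> 0) by (apply not_0_INR; lia).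
  unfold bullwhipB. field. repeat split; lra.
Qed.

Theorem mainTheorem9 :
  forall (rho muD sigmaD muL sigmaL : R) (n : nat),
    -1 < rho < 1 -> 0 < sigmaD -> 0 <= muL -> 0 < sigmaL -> (1 <= n)%nat ->
    forall m1 m2 : nat, (1 <= m1)%nat -> (m1 < m2)%nat ->
      bullwhipB muD sigmaD muL sigmaL n m2 rho
        < bullwhipB muD sigmaD muL sigmaL n m1 rho.
Proof.
  intros rho muD sigmaD muL sigmaL n Hr HsD HmuL HsL Hn m1 m2 Hm1 Hm12.
  rewrite (form muD sigmaD muL sigmaL rho n m1) by (lra || lia).
  rewrite (form muD sigmaD muL sigmaL rho n m2) by (lra || lia).
  destruct (key rho n Hr Hn) as [Ha Hk].
  assert (Hn0 : 0 < INR n) by (apply lt_0_INR; lia).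
  assert (H1 : 1 <= INR m1) by (apply (le_INR 1); lia).
  assert (H2 : INR m1 + 1 <= INR m2) by (rewrite <- S_INR; apply le_INR; lia).
  set (x := / INR m1). set (y := / INR m2).
  assert (Hx : 0 < x <= 1).
  { unfold x; split. apply Rinv_0_lt_compat; lra.
    rewrite <- Rinv_1; apply Rinv_le_contravar; lra. }
  assert (Hy : 0 < y < x /\ y <= / 2).
  { unfold y, x; split; [split|].
    apply Rinv_0_lt_compat; lra.
    apply Rinv_lt_contravar; nra.
    apply Rinv_le_contravar; lra. }
  set (h := INR n * (1 + rho) / (1 - rho) - (1 + rho ^ 2) * (1 - rho ^ n) / (1 - rho) ^ 2).
  assert (Hh : h * (1 - rho) ^ 2 = INR n * (1 - rho ^ 2) - (1 + rho ^ 2) * (1 - rho ^ n)).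
  { unfold h. field. lra. }
  set (a := 1 - rho ^ n) in *.
  assert (Hq : 0 < a + h * (x + y)).
  { assert (0 < (1 - rho) ^ 2) by nra.
    destruct (Rle_dec 0 h). nra.
    assert (0 < a + 3/2 * h) by nra. nra. }
  set (c := 2 * sigmaL ^ 2 / INR n ^ 2).
  assert (Hc : 0 < c) by (unfold c; apply Rdiv_lt_0_compat; nra).
  set (d := 2 * sigmaL ^ 2 * muD ^ 2 / sigmaD ^ 2).
  assert (Hd : 0 <= d) by (unfold d; unfold Rdiv; apply Rmult_le_pos; [nra | apply Rlt_le, Rinv_0_lt_compat; nra]).
  assert (E : c * (a * x + h * x ^ 2) - c * (a * y + h * y ^ 2) = c * (x - y) * (a + h * (x + y))) by ring.
  assert (0 < c * (x - y) * (a + h * (x + y))).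
  { apply Rmult_lt_0_compat; [apply Rmult_lt_0_compat; lra | lra]. }
  assert (0 <= d * (x ^ 2 - y ^ 2)) by (apply Rmult_le_pos; nra).
  lra.
Qed.
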